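(* Let $e_1,\dots,e_k\in\mathbb{C}^{n\times n}$ be an anticommuting family, $n\ge 1$. Then \[\sum_{i=1}^k \mathrm{rk}(e_i^n)\le (2\log_2 n+1)\,n.\]
   Context: A family $e_1,\dots,e_k$ of complex $n\times n$ matrices is called anticommuting if $e_ie_j=-e_je_i$ for all distinct $i,j\in\{1,\dots,k\}$. $\mathrm{rk}$ denotes matrix rank. *)

(* Defs.v *)
From Stdlib Require Import Reals.
From HB Require Import structures.
From mathcomp Require Import all_boot all_order all_algebra.
Set Implicit Arguments. Unset Strict Implicit. Unset Printing Implicit Defensive.
Import GRing.Theory.

Definition log_bound (n : nat) : R :=
  Rmult (Rplus (Rmult 2 (Rdiv (ln (INR n)) (ln 2))) 1) (INR n).

Definition le_log_bound (s n : nat) : Prop := Rle (INR s) (log_bound n).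

Definition anticommuting (F : pzRingType) (n k : nat) (e : 'I_k -> 'M[F]_n) : Prop :=
  forall i j : 'I_k, i != j -> (e i *m e j = - (e j *m e i))%R.

(* Main.v *)
Require Import Defs.
From Stdlib Require Import Reals Lra Lia.
From HB Require Import structures.
From mathcomp Require Import all_boot all_order all_algebra.
Import GRing.Theory.
From mathcomp Require Import zify.

Section RealPart.
Local Open Scope R_scope.

Lemma ln2_pos : 0 < ln 2.
Proof. rewrite -ln_1; apply: ln_increasing; lra. Qed.

Lemma ln_le' x y : 0 < x -> x <= y -> ln x <= ln y.
Proof. move=> hx [h|->]; [left; apply: ln_increasing => // | right] => //. Qed.

Lemma log_bound_B (n s : nat) : (1 <= n)%N -> (2 ^ s./2 <= n)%N ->
  le_log_bound (n * s) n.
Proof.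
move=> n1 hs; rewrite /le_log_bound /log_bound mult_INR.
have Hn : 1 <= INR n by apply: (le_INR 1); apply/leP.
have Hp : INR (2 ^ s./2) <= INR n by apply: le_INR; apply/leP.
have e2 : forall m, INR (2 ^ m) = INR 2 ^ m.
  by elim=> [|m IH] //; rewrite expnS mult_INR IH.
have i2 : INR 2 = 2 by simpl; lra.
rewrite e2 i2 in Hp.
have Hl : ln (2 ^ s./2) <= ln (INR n).
  apply: ln_le' => //; apply: pow_lt; lra.
rewrite ln_pow in Hl; last by lra.
have l2 := ln2_pos.
have Hs : INR s <= 2 * INR s./2 + 1.
  have : (s <= 2 * s./2 + 1)%N.
    by rewrite -{1}(odd_double_half s) -muln2 mulnC; case: (odd s) => /=; lia.
  move/leP/le_INR; rewrite plus_INR mult_INR /=; lra.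
have : INR s./2 <= ln (INR n) / ln 2.
  have e : ln (INR n) = (ln (INR n) / ln 2) * ln 2 by field; lra.
  move: Hl; rewrite {1}e. set q := ln (INR n) / ln 2. nra.
move=> H.
rewrite Rmult_comm; apply: Rmult_le_compat_r; lra.
Qed.

Lemma log_bound_mono (r n : nat) : (1 <= r)%N -> (r <= n)%N ->
  (2 * (ln (INR r) / ln 2) + 1) <= (2 * (ln (INR n) / ln 2) + 1).
Proof.
move=> r1 rn.
have Hr : 1 <= INR r by apply: (le_INR 1); apply/leP.
have Hrn : INR r <= INR n by apply: le_INR; apply/leP.
have H : ln (INR r) <= ln (INR n) by apply: ln_le' => //; lra.
have l2 := ln2_pos.
have : ln (INR r) / ln 2 <= ln (INR n) / ln 2.
  apply: Rmult_le_compat_r => //. by left; apply: Rinv_0_lt_compat.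
lra.
Qed.

Lemma log_bound_A (a b n : nat) (r : nat) : (1 <= r)%N -> (r < n)%N ->
  le_log_bound a r -> le_log_bound b (n - r) -> le_log_bound (a + b) n.
Proof.
move=> r1 rn; rewrite /le_log_bound /log_bound plus_INR => ha hb.
have h1 := log_bound_mono r n r1 (ltnW rn).
have h2 : (1 <= n - r)%N by rewrite subn_gt0.
have h3 := log_bound_mono (n - r) n h2 (leq_subr r n).
have Hr : 1 <= INR r by apply: (le_INR 1); apply/leP.
have Hnr : 1 <= INR (n - r) by apply: (le_INR 1); apply/leP.
have e : INR n = INR r + INR (n - r).
  by rewrite -plus_INR; f_equal; lia.
set L := 2 * (ln (INR n) / ln 2) + 1 in h1 h3 *.
rewrite e Rmult_plus_distr_l.
have : (2 * (ln (INR r) / ln 2) + 1) * INR r <= L * INR r.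
  by apply: Rmult_le_compat_r; lra.
have : (2 * (ln (INR (n - r)) / ln 2) + 1) * INR (n - r) <= L * INR (n - r).
  by apply: Rmult_le_compat_r; lra.
lra.
Qed.
End RealPart.

Module MX.
Import Num.Theory.
Local Open Scope ring_scope.
Set Implicit Arguments. Unset Strict Implicit.

Section Gen.
Variable F : fieldType.

Definition resmx d n (B : 'M[F]_(d, n)) (A : 'M[F]_n) : 'M[F]_d :=
  locked (B *m A *m pinvmx B).

Lemma resmxE d n (B : 'M[F]_(d, n)) A : (B *m A <= B)%MS -> resmx B A *m B = B *m A.
Proof. rewrite /resmx -lock; exact: mulmxKpV. Qed.

Lemma resmx_unit d n (B : 'M[F]_(d, n)) A : row_free B -> (B *m A <= B)%MS ->
  A \in unitmx -> resmx B A \in unitmx.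
Proof.
move=> rfB sB uA; rewrite -row_full_unit /row_full eqn_leq rank_leq_col /=.
have := mxrankM_maxl (resmx B A) B; rewrite resmxE // mxrankMfree; last by rewrite row_free_unit.
by move/eqP: rfB => ->.
Qed.

Lemma resmx_anti d n (B : 'M[F]_(d, n)) A1 A2 : row_free B -> (B *m A1 <= B)%MS ->
  (B *m A2 <= B)%MS -> A1 *m A2 = - (A2 *m A1) ->
  resmx B A1 *m resmx B A2 = - (resmx B A2 *m resmx B A1).
Proof.
move=> rfB s1 s2 h; apply: (row_free_inj rfB) => /=.
by rewrite mulNmx -!mulmxA !resmxE // !mulmxA !resmxE // -!mulmxA h mulmxN.
Qed.

Lemma resmx_pow d n (B : 'M[F]_(d, n)) A m : (B *m A <= B)%MS ->
  resmx B A ^+ m *m B = B *m A ^+ m.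
Proof.
move=> s; elim: m => [|m IH]; first by rewrite !expr0 mul1mx mulmx1.
by rewrite !exprS -!mulmxE -mulmxA IH mulmxA resmxE // mulmxA.
Qed.

Lemma rank_pow_noninc n (A : 'M[F]_n) k m : (\rank (A ^+ (k + m)) <= \rank (A ^+ k))%N.
Proof. by rewrite addnC exprD -mulmxE mxrankM_maxr. Qed.

Lemma rank_pow_const n (A : 'M[F]_n) k : \rank (A ^+ k.+1) = \rank (A ^+ k) ->
  forall m, \rank (A ^+ (k + m)) = \rank (A ^+ k).
Proof.
move=> h m; elim: m => [|m IH]; first by rewrite addn0.
have sub : forall j, (A ^+ j.+1 <= A ^+ j)%MS.
  by move=> j; rewrite exprS -mulmxE submxMl.
have eq1 : forall j, \rank (A ^+ j.+1) = \rank (A ^+ j) -> (A ^+ j.+1 :=: A ^+ j)%MS.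
  move=> j hj; apply/eqmxP; rewrite -(geq_leqif (mxrank_leqif_eq (sub j))).
  by rewrite hj.
suff : \rank (A ^+ (k + m).+1) = \rank (A ^+ (k + m)) by rewrite addnS => ->.
elim: m {IH} => [|m IH]; first by rewrite addn0.
rewrite addnS (exprSr A (k + m).+1) -mulmxE.
by rewrite (eqmxMr _ (eq1 _ IH)) exprSr -mulmxE.
Qed.

Lemma rank_pow_stab n (A : 'M[F]_n) m : (n <= m)%N -> \rank (A ^+ m) = \rank (A ^+ n).
Proof.
have key : forall k, (\rank (A ^+ k) + k <= n)%N \/
   exists2 j, (j < k)%N & \rank (A ^+ j.+1) = \rank (A ^+ j).
  elim=> [|k [IH|[j jk hj]]]; first by left; rewrite expr0 mxrank1 addn0.
  - have := rank_pow_noninc A k 1; rewrite addn1 leq_eqVlt => /orP[/eqP h|h].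
      by right; exists k.
    by left; rewrite addnS; apply: leq_trans IH; rewrite ltn_add2r.
  - by right; exists j => //; apply: ltnW.
move=> nm; have [h|[j jn hj]] := key n.
  have h0 : \rank (A ^+ n) = 0%N by lia.
  have e1 : (n + (m - n))%N = m by lia.
  by rewrite h0; apply/eqP; rewrite -leqn0 -h0 -{1}e1 rank_pow_noninc.
have c := rank_pow_const hj.
have e1 : (j + (m - j))%N = m by lia.
have e2 : (j + (n - j))%N = n by lia.
have := c (n - j)%N; rewrite e2 => ->.
by have := c (m - j)%N; rewrite e1 => ->.
Qed.

End Gen.

Section Inv.
Variable C : numClosedFieldType.

Lemma eig_sub r (a : 'M[C]_r) (l : C) m (X : 'M_(m, r)) :
  (X <= eigenspace a l)%MS = (X *m a == l *: X).
Proof. by rewrite sub_kermx mulmxBr mul_mx_scalar subr_eq0. Qed.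

Lemma inv_bound k : forall r (e : 'I_k -> 'M[C]_r), (0 < r)%N -> anticommuting e ->
  (forall i, e i \in unitmx) -> (2 ^ k./2 <= r)%N.
Proof.
elim/ltn_ind: k => k IHk r e r0 ac un.
case: k IHk e ac un => [|[|k']] IHk e ac un; try by rewrite expn0.
set i0 : 'I_k'.+2 := ord0.
set i1 : 'I_k'.+2 := @Ordinal k'.+2 1 isT.
set idx := fun j : 'I_k' => @Ordinal k'.+2 j.+2 (ltn_ord j).
set a := e i0; set b := e i1.
have ab : a *m b = - (b *m a) by apply: ac.
have ua : a \in unitmx := un i0.
have ub : b \in unitmx := un i1.
have [l hl] : exists l, eigenvalue a l.
  have : size (char_poly a) != 1%N by rewrite size_char_poly; lia.
  by move/closed_rootP => [x hx]; exists x; rewrite eigenvalue_root_char.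
set W := eigenspace a l.
have Wa : W *m a = l *: W by apply/eqP; rewrite -eig_sub.
have l0 : l != 0.
  apply/eqP => l0; move: hl; rewrite /eigenvalue -/W => /negP; apply.
  have : W *m a = 0 *m a by rewrite Wa l0 scale0r mul0mx.
  have rfa : row_free a by rewrite row_free_unit.
  by move/(row_free_inj rfa) => ->.
set W' := eigenspace a (- l).
have ba : b *m a = - (a *m b) by rewrite ab opprK.
have Wb : (W *m b <= W')%MS.
  by rewrite eig_sub -mulmxA ba mulmxN mulmxA Wa -scalemxAl scaleNr.
have capW : (W :&: W')%MS = 0.
  apply/eqP; rewrite -submx0.
  set X := (W :&: W')%MS.
  have h1 : X *m a = l *: X by apply/eqP; rewrite -eig_sub capmxSl.
  have h2 : X *m a = - l *: X by apply/eqP; rewrite -eig_sub capmxSr.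
  have : (l + l) *: X = 0 by rewrite scalerDl -{1}h1 h2 scaleNr addNr.
  move/eqP; rewrite scaler_eq0 => /orP[|/eqP->]; last by rewrite submx_refl.
  by rewrite -mulr2n mulrn_eq0 (negbTE l0).
have rkW : (2 * \rank W <= r)%N.
  have := mxrank_disjoint_sum capW.
  have := rank_leq_col (W + W')%MS.
  have : \rank (W *m b) = \rank W by rewrite mxrankMfree // row_free_unit.
  have := mxrankS Wb.
  lia.
have Wne : (0 < \rank W)%N by rewrite lt0n mxrank_eq0.
have aidx : forall j, e (idx j) *m a = - (a *m e (idx j)).
  by move=> j; apply: ac.
have bidx : forall j, e (idx j) *m b = - (b *m e (idx j)).
  by move=> j; apply: ac.
have cidx : forall j, e (idx j) *m (a *m b) = (a *m b) *m e (idx j).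
  move=> j; rewrite mulmxA aidx mulNmx -!mulmxA bidx mulmxN opprK //.
set f := fun j => (a *m b) *m e (idx j).
have fa : forall j, f j *m a = a *m f j.
  move=> j; rewrite /f -!mulmxA aidx !mulmxN (mulmxA b a) ba mulNmx mulmxN opprK.
  by rewrite -!mulmxA.
set B := row_base W.
have rfB : row_free B by apply: row_base_free.
have sf : forall j, (B *m f j <= B)%MS.
  move=> j; rewrite /B (eq_row_base W) (eqmxMr _ (eq_row_base W)).
  by rewrite /W eig_sub -/W -mulmxA fa mulmxA Wa -scalemxAl.
set g := fun j => resmx B (f j).
have ug : forall j, g j \in unitmx.
  move=> j; apply: resmx_unit => //.
  by rewrite /f !unitmx_mul ua ub un.
have ff : forall j j', f j *m f j' = (a *m b) *m ((a *m b) *m (e (idx j) *m e (idx j'))).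
  move=> j j'; rewrite /f.
  by rewrite -(mulmxA (a *m b)) (mulmxA (e (idx j))) cidx -(mulmxA (a *m b) (e (idx j))).
have acg : anticommuting g.
  move=> j j' jj'; apply: resmx_anti => //.
  have ne : idx j != idx j' by [].
  by rewrite !ff (ac (idx j) (idx j') ne) !mulmxN.
have := IHk k' (ltnW (ltnSn _)) _ g Wne acg ug.
rewrite /= expnS; lia.
Qed.
End Inv.

Section Main.
Variable C : numClosedFieldType.

Lemma pow_anti n (x y : 'M[C]_n) m : x *m y = - (y *m x) ->
  x ^+ m *m y = (-1) ^+ m *: (y *m x ^+ m).
Proof.
move=> h; elim: m => [|m IH]; first by rewrite !expr0 mul1mx mulmx1 scale1r.
by rewrite !exprS -!mulmxE -mulmxA IH -scalemxAr !mulmxA h mulNmx scalerN -scalerA scaleN1r.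
Qed.

Lemma unit_pow n (x : 'M[C]_n) m : (0 < m)%N -> x ^+ m \in unitmx -> x \in unitmx.
Proof. by case: m => // m _; rewrite exprS -mulmxE unitmx_mul => /andP[]. Qed.

Lemma sign_sq m : ((-1) ^+ m * (-1) ^+ m : C) = 1.
Proof. by rewrite -exprMn mulrNN mulr1 expr1n. Qed.

Lemma main_aux n : (1 <= n)%N -> forall k (e : 'I_k -> 'M[C]_n), anticommuting e ->
  le_log_bound (\sum_(i < k) \rank (e i ^+ n))%N n.
Proof.
elim/ltn_ind: n => n IHn n1 k e ac.
case: (boolP [exists i, (0 < \rank (e i ^+ n))%N && (\rank (e i ^+ n) < n)%N]).
  move=> /existsP [i /andP [r0 rn]].
  set A := e i ^+ n.
  have kA : kermx A *m A = 0 by apply: mulmx_ker.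
  have invA : forall j, (A *m e j <= A)%MS /\ (kermx A *m e j <= kermx A)%MS.
    move=> j; have [<-|ij] := eqVneq i j.
      have cm : A *m e i = e i *m A by rewrite /A !mulmxE -exprSr exprS.
      split; first by rewrite cm submxMl.
      by rewrite sub_kermx -mulmxA -cm mulmxA kA mul0mx.
    have h := pow_anti n (ac i j ij).
    have h' : e j *m A = (-1) ^+ n *: (A *m e j).
      by rewrite /A h scalerA sign_sq scale1r.
    split; first by rewrite /A h scalemx_sub // submxMl.
    by rewrite sub_kermx -mulmxA h' -scalemxAr mulmxA kA mul0mx scaler0.
  set U := row_base A; set N := row_base (kermx A).
  have rfU : row_free U by apply: row_base_free.
  have rfN : row_free N by apply: row_base_free.
  have sU : forall j, (U *m e j <= U)%MS.
    by move=> j; rewrite /U (eq_row_base A) (eqmxMr _ (eq_row_base A)); case: (invA j).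
  have sN : forall j, (N *m e j <= N)%MS.
    by move=> j; rewrite /N (eq_row_base _) (eqmxMr _ (eq_row_base _)); case: (invA j).
  have rAA : \rank (A *m A) = \rank A.
    by rewrite /A mulmxE -exprD rank_pow_stab // leq_addr.
  have capUN : (U :&: N)%MS = 0.
    apply/eqP; rewrite -mxrank_eq0 -leqn0.
    have := mxrank_mul_ker A A; rewrite rAA => hk.
    have : (U :&: N <= A :&: kermx A)%MS.
      by apply: capmxS; rewrite ?/U ?/N eq_row_base.
    move/mxrankS; lia.
  set d1 : nat := \rank A; set d2 : nat := \rank (kermx A).
  have d2E : d2 = (n - d1)%N by rewrite /d2 mxrank_ker.
  pose gU := fun j => resmx U (e j).
  pose gN := fun j => resmx N (e j).
  have acU : anticommuting gU.
    by move=> j j' jj'; apply: resmx_anti => //; apply: ac.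
  have acN : anticommuting gN.
    by move=> j j' jj'; apply: resmx_anti => //; apply: ac.
  have hU := IHn d1 rn r0 k gU acU.
  have r0' : (0 < d1)%N := r0.
  have rn' : (d1 < n)%N := rn.
  have d2n : (d2 < n)%N by rewrite d2E; lia.
  have d20 : (0 < d2)%N by rewrite d2E; lia.
  have hN := IHn d2 d2n d20 k gN acN.
  have full : \rank (U + N)%MS = n.
    by rewrite mxrank_disjoint_sum // /U /N !eq_row_base -/d1 -/d2 d2E; lia.
  have key : forall j, \rank (e j ^+ n) = (\rank (gU j ^+ d1) + \rank (gN j ^+ d2))%N.
    move=> j; set M := e j ^+ n.
    have sUM : (U *m M <= U)%MS by rewrite -(resmx_pow _ (sU j)) submxMl.
    have sNM : (N *m M <= N)%MS by rewrite -(resmx_pow _ (sN j)) submxMl.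
    have rU : \rank (gU j ^+ d1) = \rank (U *m M).
      rewrite -(resmx_pow _ (sU j)) mxrankMfree // [RHS]rank_pow_stab //.
      by apply: ltnW.
    have rN : \rank (gN j ^+ d2) = \rank (N *m M).
      rewrite -(resmx_pow _ (sN j)) mxrankMfree // [RHS]rank_pow_stab //.
      by apply: ltnW.
    have cap : (U *m M :&: N *m M)%MS = 0.
      by apply/eqP; rewrite -submx0 -capUN capmxS.
    rewrite rU rN -(mxrank_disjoint_sum cap).
    have hh : \rank ((U + N)%MS *m M) = \rank (U *m M + N *m M)%MS.
      by rewrite (addsmxMr U N M).
    rewrite -hh; apply/eqP; rewrite eqn_leq mxrankM_maxr andbT.
    apply: mxrankS; rewrite -{1}(mul1mx M) submxMr // sub1mx.
    by rewrite /row_full full.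
  rewrite (eq_bigr _ (fun j _ => key j)) big_split /=.
  apply: (log_bound_A _ _ _ _ r0 rn hU).
  by rewrite -d2E.
rewrite negb_exists => /forallP hnone.
set S := [set i | \rank (e i ^+ n) == n].
have -> : (\sum_(i < k) \rank (e i ^+ n) = \sum_(i in S) n)%N.
  rewrite [RHS]big_mkcond /=; apply: eq_bigr => i _; rewrite inE.
  have := hnone i; have := rank_leq_col (e i ^+ n).
  case: eqP => [//|ne] le; rewrite negb_and -!leqNgt => /orP[]; lia.
rewrite sum_nat_const mulnC.
apply: log_bound_B => //.
pose e' := fun j : 'I_#|S| => e (enum_val j).
apply: (@inv_bound C _ n e') => //.
- move=> j j' jj'; apply: ac.
  by apply: contra jj' => /eqP /enum_val_inj ->.
- move=> j; apply: (@unit_pow _ _ n) => //.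
  have := enum_valP j; rewrite inE -row_free_unit.
  by [].
Qed.
End Main.

End MX.

Theorem theorem3 (C : numClosedFieldType) (n k : nat) (e : 'I_k -> 'M[C]_n) :
  (1 <= n)%N -> anticommuting e ->
  le_log_bound (\sum_(i < k) \rank (e i ^+ n)%R)%N n.
Proof.
move=> n1 ac; exact: (@MX.main_aux C n n1 k e ac).
Qed.
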